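(* Let $L$ be a finite graded lattice of rank $n$ with an $S_n$ EL-labeling, let $\mathfrak m$ be a maximal chain of $L$, and let $\mathfrak m'\in\mathcal{M}_{\mathfrak m}$. Then $Q_{\mathfrak m'}=L_{\mathfrak m'}$.
   Context: An $S_n$ EL-labeling: edge-labeling of covering pairs such that each interval has exactly one maximal chain with weakly increasing labels (bottom to top), lexicographically smallest among its maximal chains, and labels along each maximal chain form a permutation of $[n]$. $\mathfrak m_0$ denotes the unique maximal chain of $L$ whose labels are $1,2,\dots,n$ (the identity permutation). For a maximal chain $\mathfrak c$, $L_{\mathfrak c}$ is the sublattice of $L$ generated by $\mathfrak m_0$ and $\mathfrak c$. $U_i(\mathfrak c)$ ($i\in[n-1]$) is the unique maximal chain agreeing with $\mathfrak c$ except possibly at rank $i$ whose labels have no descent at position $i$. $\mathcal{M}_{\mathfrak c}$ is the set of all chains $U_{i_1}\cdots U_{i_r}(\mathfrak c)$ over all finite sequences (including empty), and $Q_{\mathfrak c}$ is the subposet of $L$ consisting of all elements lying on some chain in $\mathcal{M}_{\mathfrak c}$. *)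

(* Defs.v *)
From HB Require Import structures.
From mathcomp Require Import all_boot all_order.
Set Implicit Arguments. Unset Strict Implicit. Unset Printing Implicit Defensive.
Import Order.Theory.
Local Open Scope order_scope.

Section ELDefs.
Context {disp : Order.disp_t} {L : finTBLatticeType disp}.

Definition covers (x y : L) : bool :=
  (x < y) && [forall z : L, ~~ ((x < z) && (z < y))].

Definition maxchain_in (x y : L) (c : seq L) : Prop :=
  [/\ c != [::], head x c = x, last x c = y & path covers x (behead c)].

Definition maxchain (c : seq L) : Prop := maxchain_in \bot \top c.

Definition graded_rank (n : nat) : Prop :=
  forall c : seq L, maxchain c -> size c = n.+1.

Definition labels (lam : L -> L -> nat) (c : seq L) : seq nat :=
  if c is x :: s then pairmap lam x s else [::].

Fixpoint lexlt (s t : seq nat) : bool :=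
  match s, t with
  | x :: s', y :: t' => (x < y)%N || ((x == y) && lexlt s' t')
  | [::], _ :: _ => true
  | _, [::] => false
  end.

Definition EL_labeling (lam : L -> L -> nat) : Prop :=
  forall x y : L, x <= y ->
  exists c, [/\ maxchain_in x y c, sorted leq (labels lam c),
    (forall c', maxchain_in x y c' -> sorted leq (labels lam c') -> c' = c) &
    (forall c', maxchain_in x y c' -> c' <> c ->
       lexlt (labels lam c) (labels lam c'))].

Definition Sn_EL_labeling (n : nat) (lam : L -> L -> nat) : Prop :=
  EL_labeling lam /\
  forall c, maxchain c -> perm_eq (labels lam c) (iota 1 n).

(* d = U_i(c): maximal chain agreeing with c except possibly at rank i,
   whose labels have no descent at position i *)
Definition isU (lam : L -> L -> nat) (i : nat) (c d : seq L) : Prop :=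
  [/\ maxchain d, size d = size c,
      (forall j, j != i -> nth \bot d j = nth \bot c j) &
      (nth 0 (labels lam d) i.-1 <= nth 0 (labels lam d) i)%N].

(* M_c : chains U_{i1} ... U_{ir}(c), i_k in [n-1] *)
Inductive inM (n : nat) (lam : L -> L -> nat) (c : seq L) : seq L -> Prop :=
  | inM_refl : inM n lam c c
  | inM_step i d e : (1 <= i <= n.-1)%N -> inM n lam c d -> isU lam i d e ->
      inM n lam c e.

Definition inQ (n : nat) (lam : L -> L -> nat) (c : seq L) (x : L) : Prop :=
  exists2 d, inM n lam c d & x \in d.

Definition lattice_closed (S : {set L}) : bool :=
  [forall x in S, forall y in S, (x `&` y \in S) && (x `|` y \in S)].

Definition gen_sublattice (A : {set L}) : {set L} :=
  \bigcap_(S : {set L} | (A \subset S) && lattice_closed S) S.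

Definition Lgen (m0 c : seq L) : {set L} :=
  gen_sublattice [set x | (x \in m0) || (x \in c)].

End ELDefs.
Arguments graded_rank {disp} L n.

(* Main.v *)
Require Import Defs.
From HB Require Import structures.
From mathcomp Require Import all_boot all_order.
From mathcomp Require Import zify.
Set Implicit Arguments. Unset Strict Implicit. Unset Printing Implicit Defensive.
Import Order.Theory.
Local Open Scope order_scope.

Section Chains.
Context {disp : Order.disp_t} {L : finTBLatticeType disp}.
Implicit Types (x y z : L) (s t u : seq L).

Definition ch x s y := path (@covers _ L) x s && (last x s == y).

Lemma covers_lt x y : covers x y -> x < y.
Proof. by case/andP. Qed.

Lemma covers_between x y z : covers x y -> x <= z -> z <= y -> z = x \/ z = y.
Proof.
case/andP=> _ /forallP /(_ z); rewrite negb_and => H le1 le2.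
case: (eqVneq z x) => [->|nx]; [by left|].
case: (eqVneq z y) => [->|ny]; [by right|].
by move: H; rewrite !lt_neqAle le1 le2 eq_sym nx ny.
Qed.

Lemma ch_le x s y : ch x s y -> x <= y.
Proof.
elim: s x => [|a s IH] x /andP[/= p /eqP e]; first by rewrite e.
case/andP: p => /covers_lt/ltW h p.
apply: (le_trans h); apply: IH; by rewrite /ch p e eqxx.
Qed.

Lemma ch_nil x y : ch x [::] y -> x = y.
Proof. by case/andP=> _ /eqP. Qed.

Lemma ch_cat x s y t z : ch x s y -> ch y t z -> ch x (s ++ t) z.
Proof.
case/andP=> p1 /eqP e1 /andP[p2 e2].
by rewrite /ch cat_path p1 e1 p2 last_cat e1.
Qed.

Lemma ch_split x s y k :
  ch x s y -> ch x (take k s) (last x (take k s)) /\ ch (last x (take k s)) (drop k s) y.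
Proof.
case/andP; rewrite -{1}(cat_take_drop k s) cat_path => /andP[p1 p2] e.
split; first by rewrite /ch p1 eqxx.
by rewrite /ch p2 -last_cat cat_take_drop.
Qed.

Lemma ch_take_le x s y k : ch x s y -> last x (take k s) <= y.
Proof. by move/(ch_split k)=> [_ /ch_le]. Qed.

Lemma ch_take_ge x s y k : ch x s y -> x <= last x (take k s).
Proof. by move/(ch_split k)=> [/ch_le]. Qed.

Lemma ch_take_mono x s y j k : (j <= k)%N -> ch x s y ->
  last x (take j s) <= last x (take k s).
Proof.
move=> jk /(ch_split k) [h _].
by have := ch_take_le j h; rewrite take_takel.
Qed.

Lemma take_pairmap (T1 T2 : Type) (f : T1 -> T1 -> T2) (x : T1) (s : seq T1) k :
  take k (pairmap f x s) = pairmap f x (take k s).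
Proof. by elim: s x k => [|a s IH] x [|k] //=; rewrite IH. Qed.

Lemma maxchain_inE x y c : maxchain_in x y c <-> exists s, c = x :: s /\ ch x s y.
Proof.
split.
  case: c => [|a s] [] //= _ -> e p; exists s; split=> //.
  by rewrite /ch p e eqxx.
case=> s [-> /andP[p /eqP e]]; split=> //.
Qed.

Lemma last_take_mem x s k : last x (take k s) \in x :: s.
Proof.
have : last x (take k s) \in x :: take k s by rewrite mem_last.
rewrite !inE => /orP[->//|/mem_take ->]; by rewrite orbT.
Qed.

Lemma mem_last_take x s z : z \in x :: s ->
  exists2 k, (k <= size s)%N & z = last x (take k s).
Proof.
rewrite inE => /orP[/eqP ->|zs]; first by exists 0%N; rewrite ?take0.
exists (index z s).+1; first by rewrite index_mem.
by rewrite (take_nth x) ?index_mem // last_rcons nth_index.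
Qed.



Section Main.
Variables (n : nat) (lam : L -> L -> nat).
Hypothesis HEL : EL_labeling lam.
Hypothesis Hperm : forall c, maxchain c -> perm_eq (labels lam c) (iota 1 n).

Local Notation pm := (pairmap lam).

Lemma ex_inc x y : x <= y -> exists s, [/\ ch x s y, sorted leq (pm x s) &
  forall s', ch x s' y -> sorted leq (pm x s') -> s' = s].
Proof.
move=> /HEL [c [/maxchain_inE [s [-> hs]] so un _]].
exists s; split=> // s' h' so'.
have mc : maxchain_in x y (x :: s') by apply/maxchain_inE; exists s'.
by case: (un (x :: s') mc so').
Qed.

Lemma ex_ch x y : x <= y -> exists s, ch x s y.
Proof. by move/ex_inc=> [s [h _ _]]; exists s. Qed.

Lemma top_perm s : ch \bot s \top -> perm_eq (pm \bot s) (iota 1 n).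
Proof. by move=> h; apply: (Hperm (c := \bot :: s)); apply/maxchain_inE; exists s. Qed.

Lemma pm_perm x s s' : ch \bot s x -> ch \bot s' x -> perm_eq (pm \bot s) (pm \bot s').
Proof.
move=> h h'; have [t ht] := ex_ch (lex1 x).
have p1 := top_perm (ch_cat h ht); have p2 := top_perm (ch_cat h' ht).
move: h h' => /andP[_ /eqP e] /andP[_ /eqP e'].
move: p1 p2; rewrite !pairmap_cat e e' => p1 p2.
by rewrite -(perm_cat2r (pm x t)) (permPl p1) perm_sym.
Qed.

Lemma pm_ext_perm x s t y : ch \bot s x -> ch x t y -> ch \bot (s ++ t) y /\
  pm \bot (s ++ t) = pm \bot s ++ pm x t.
Proof.
move=> h h'; split; first exact: ch_cat h h'.
by case/andP: h => _ /eqP e; rewrite pairmap_cat e.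
Qed.

Lemma pm_uniq x s : ch \bot s x -> uniq (pm \bot s).
Proof.
move=> h; have [t ht] := ex_ch (lex1 x).
have [h2 e] := pm_ext_perm h ht.
have := top_perm h2; rewrite e => /perm_uniq; rewrite iota_uniq cat_uniq.
by case/andP.
Qed.

Lemma pm_lab x s b : ch \bot s x -> b \in pm \bot s -> b \in iota 1 n.
Proof.
move=> h bs; have [t ht] := ex_ch (lex1 x).
have [h2 e] := pm_ext_perm h ht.
by rewrite -(perm_mem (top_perm h2)) e mem_cat bs.
Qed.

Definition cx x := @xchoose _ (fun s => ch \bot s x) (ex_ch (le0x x)).
Lemma cxP x : ch \bot (cx x) x.
Proof. exact: (@xchooseP _ (fun s => ch \bot s x)). Qed.

Definition S x := pm \bot (cx x).

Lemma S_ch s x : ch \bot s x -> perm_eq (S x) (pm \bot s).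
Proof. by move=> h; apply: pm_perm (cxP x) h. Qed.

Lemma S_uniq x : uniq (S x).
Proof. exact: pm_uniq (cxP x). Qed.

Lemma S_lab x b : b \in S x -> b \in iota 1 n.
Proof. exact: pm_lab (cxP x). Qed.

Lemma S_step x t y : ch x t y -> perm_eq (S y) (S x ++ pm x t).
Proof.
move=> h; have [h2 e] := pm_ext_perm (cxP x) h.
by rewrite -e; apply: S_ch.
Qed.

Lemma S_sub x y : x <= y -> {subset S x <= S y}.
Proof.
move=> /ex_ch [t /S_step p] b bx.
by rewrite (perm_mem p) mem_cat bx.
Qed.

Lemma S_eq x y : x <= y -> {subset S y <= S x} -> x = y.
Proof.
move=> /ex_ch [t h] sub.
have p := S_step h.
have := uniq_leq_size (S_uniq y) sub.
rewrite (perm_size p) size_cat size_pairmap.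
case: t h {p} => [|a t] h; first by rewrite (ch_nil h).
by rewrite /= addnS ltnNge leq_addr.
Qed.

Lemma S_cover x y : covers x y -> perm_eq (S y) (S x ++ [:: lam x y]).
Proof. by move=> c; apply: (S_step (t := [:: y])); rewrite /ch /= c eqxx. Qed.

Lemma S_top : perm_eq (S \top) (iota 1 n).
Proof.
have [s hs] := ex_ch (lex1 (\bot : L)).
by rewrite (permPl (S_ch hs)) top_perm.
Qed.


Lemma take_count_sorted (l : seq nat) k : sorted leq l ->
  take (count (fun b => (b <= k)%N) l) l = filter (fun b => (b <= k)%N) l.
Proof.
elim: l => [|a l IH] //= so.
have sl := path_sorted so.
case: (leqP a k) => ak /=; first by rewrite /= IH.
have al := order_path_min leq_trans so.
have -> : count (fun b => (b <= k)%N) l = 0%N.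
  apply/eqP; rewrite -leqn0 leqNgt -has_count; apply/hasPn => b /(allP al) ab.
  by rewrite -ltnNge (leq_trans ak ab).
rewrite take0; apply/esym/eqP; rewrite -size_eq0 size_filter.
apply/eqP/eqP; rewrite -leqn0 leqNgt -has_count; apply/hasPn => b /(allP al) ab.
by rewrite -ltnNge (leq_trans ak ab).
Qed.

Variable s0 : seq L.
Hypothesis Hs0 : ch \bot s0 \top.
Hypothesis Hl0 : pm \bot s0 = iota 1 n.

Definition M k := last \bot (take k s0).

Lemma M_ch k : ch \bot (take k s0) (M k).
Proof. by case: (ch_split k Hs0). Qed.

Lemma S_M k : (k <= n)%N -> perm_eq (S (M k)) (iota 1 k).
Proof.
move=> kn; rewrite (permPl (S_ch (M_ch k))) -take_pairmap Hl0 take_iota.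
by rewrite (minn_idPl kn).
Qed.

Lemma S_M_mem k b : (k <= n)%N -> (b \in S (M k)) = (b \in iota 1 k).
Proof. by move=> kn; rewrite (perm_mem (S_M kn)). Qed.

Lemma S_M_eq z k : (k <= n)%N -> perm_eq (S z) (iota 1 k) -> z = M k.
Proof.
move=> kn pz.
have [u [hu su _]] := ex_inc (le0x z).
have eu : pm \bot u = iota 1 k.
  apply: (sorted_eq leq_trans anti_leq su (iota_sorted _ _)).
  by rewrite -(permPl (S_ch hu)).
have [t [ht st _]] := ex_inc (lex1 z).
have [hut eut] := pm_ext_perm hu ht.
have et : pm z t = iota (1 + k) (n - k).
  apply: (sorted_eq leq_trans anti_leq st (iota_sorted _ _)).
  have := top_perm hut; rewrite eut eu.
  have -> : iota 1 n = iota 1 k ++ iota (1 + k) (n - k) by rewrite -iotaD subnKC.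
  by rewrite perm_cat2l.
have [s [hs _ un]] := ex_inc (le0x (\top : L)).
have e1 : u ++ t = s by apply: (un _ hut); rewrite eut eu et -iotaD subnKC // iota_sorted.
have e2 : s0 = s by apply: (un _ Hs0); rewrite Hl0 iota_sorted.
have szu : size u = k by rewrite -(size_pairmap lam \bot) eu size_iota.
rewrite /M e2 -e1 -szu take_size_cat //.
by case/andP: hu => _ /eqP.
Qed.

Lemma M_le k w : (k <= n)%N -> {subset iota 1 k <= S w} -> M k <= w.
Proof.
move=> kn sub.
have [u [hu su _]] := ex_inc (le0x w).
set l := pm \bot u.
have pf : perm_eq (filter (fun b => (b <= k)%N) l) (iota 1 k).
  apply: uniq_perm; first by rewrite filter_uniq // (pm_uniq hu).
    exact: iota_uniq.
  move=> b; rewrite mem_filter mem_iota.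
  apply/andP/andP.
    move=> [bk bl]; have := pm_lab hu bl; rewrite mem_iota => /andP[-> _].
    by rewrite add1n ltnS.
  move=> [b1 bk]; have bi : b \in iota 1 k by rewrite mem_iota b1.
  have := sub _ bi; rewrite (perm_mem (S_ch hu)) => ->.
  by move: bk; rewrite add1n ltnS => ->.
have ck : count (fun b => (b <= k)%N) l = k.
  by rewrite -size_filter (perm_size pf) size_iota.
set z := last \bot (take k u).
have zw : z <= w by apply: ch_take_le hu.
suff -> : M k = z by [].
apply/esym/S_M_eq => //.
have [h1 _] := ch_split k hu.
rewrite (permPl (S_ch h1)) -take_pairmap -/l -{1}ck take_count_sorted //.
Qed.

Lemma M_ge k w : (k <= n)%N -> {subset S w <= iota 1 k} -> w <= M k.
Proof.
move=> kn sub.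
have [t [ht st _]] := ex_inc (lex1 w).
set l := pm w t.
set j := count (fun b => (b <= k)%N) l.
set z := last w (take j t).
have wz : w <= z by apply: ch_take_ge ht.
suff -> : M k = z by [].
apply/esym/S_M_eq => //.
have [h1 _] := ch_split j ht.
have pz := S_step h1.
have ptop := S_step ht.
apply: uniq_perm; [exact: S_uniq | exact: iota_uniq |].
move=> b; rewrite (perm_mem pz) -take_pairmap -/l /j take_count_sorted //.
rewrite mem_cat mem_filter.
apply/idP/idP.
  case/orP=> [/sub //|/andP[bk bl]].
  have : b \in S \top by rewrite (perm_mem ptop) mem_cat bl orbT.
  rewrite (perm_mem S_top) !mem_iota => /andP[-> _].
  by rewrite add1n ltnS.
move=> bi; have : b \in S \top.
  rewrite (perm_mem S_top); move: bi; rewrite !mem_iota => /andP[-> bk].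
  by rewrite (leq_trans bk) // ltnS.
rewrite (perm_mem ptop) mem_cat => /orP[->//|bl].
by move: bi; rewrite mem_iota add1n ltnS => /andP[_ ->]; rewrite bl orbT.
Qed.


Lemma sorted_rcons_max (l : seq nat) B b : sorted leq (rcons l B) -> b \in rcons l B -> (b <= B)%N.
Proof.
elim: l => [|a l IH] /=; first by rewrite inE => _ /eqP ->.
move=> so; rewrite inE => /orP[/eqP ->|bl]; last exact: IH (path_sorted so) bl.
have := order_path_min leq_trans so => /allP; apply.
by rewrite mem_rcons mem_head.
Qed.

Lemma S_meetM v k b : (k <= n)%N -> b \in S v -> (b <= k)%N -> b \in S (v `&` M k).
Proof.
move=> kn bv bk; set u := v `&` M k.
apply/negPn/negP => bnu.
have [t [ht st _]] := ex_inc (leIl v (M k)).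
have pt := S_step ht.
have bt : b \in pm u t by move: bv; rewrite (perm_mem pt) mem_cat (negbTE bnu).
case: t ht st pt bt => [|y t'] //= ht st pt bt.
case/andP: ht => /= /andP[cuy pt'] el.
have ab : (lam u y <= b)%N.
  move: bt; rewrite inE => /orP[/eqP -> //|bt].
  by have := order_path_min leq_trans st => /allP /(_ _ bt).
have py := S_cover cuy.
have yM : y <= M k.
  apply: M_ge => // c; rewrite (perm_mem py) mem_cat => /orP[cu|].
    by rewrite -(S_M_mem _ kn); apply: (S_sub (leIr (M k) v)).
  rewrite inE => /eqP ->.
  have : lam u y \in S y by rewrite (perm_mem py) mem_cat mem_head orbT.
  move/S_lab; rewrite !mem_iota => /andP[-> _] /=.
  by rewrite add1n ltnS (leq_trans ab bk).
have yv : y <= v by apply: (ch_le (s := t')); rewrite /ch pt' el.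
have : y <= u by rewrite lexI yv yM.
by rewrite (lt_geF (covers_lt cuy)).
Qed.

Lemma S_joinM v k b : (k <= n)%N -> b \in S (v `|` M k) -> b \notin S v -> (b <= k)%N.
Proof.
move=> kn bu bnv; set u := v `|` M k.
have [t [ht st _]] := ex_inc (leUl v (M k)).
have pt := S_step ht.
have bt : b \in pm v t by move: bu; rewrite (perm_mem pt) mem_cat (negbTE bnv).
case/lastP: t ht st pt bt => [|t' y] //= ht st pt bt.
move: ht; rewrite /ch rcons_path last_rcons => /andP[/andP[pt' cy] /eqP ey].
subst y.
set y' := last v t' in cy.
move: st bt; rewrite -cats1 pairmap_cat /= -/y' cats1 => st bt.
have bB := sorted_rcons_max st bt.
rewrite leqNgt; apply/negP => kb.
have py := S_cover cy.
have My : M k <= y'.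
  apply: M_le => // c ci.
  have : c \in S u by apply: (S_sub (leUr (M k) v)); rewrite S_M_mem.
  rewrite (perm_mem py) mem_cat inE => /orP[//|/eqP ec].
  by move: ci; rewrite ec mem_iota add1n ltnS (leqNgt _ k) (leq_trans kb bB) andbF.
have vy : v <= y' by apply: (ch_le (s := t')); rewrite /ch pt' eqxx.
have : u <= y' by rewrite leUx vy My.
by rewrite (lt_geF (covers_lt cy)).
Qed.


Variable cs : seq L.
Hypothesis Hc : ch \bot cs \top.
Local Notation lc := (pm \bot cs).

Definition C k := last \bot (take k cs).
Definition g b := C (index b lc).+1 `&` M b.
Definition h (T : seq nat) := \join_(b <- T) g b.

Lemma S_C k : perm_eq (S (C k)) (take k lc).
Proof. by case: (ch_split k Hc) => h1 _; rewrite (permPl (S_ch h1)) take_pairmap. Qed.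

Lemma C_mono j k : (j <= k)%N -> C j <= C k.
Proof. by move=> jk; apply: ch_take_mono jk Hc. Qed.

Lemma g_mem b : b \in iota 1 n -> b \in S (g b).
Proof.
move=> bi; have bl : b \in lc by rewrite (perm_mem (top_perm Hc)).
apply: S_meetM => //.
- by move: bi; rewrite mem_iota add1n ltnS => /andP[].
- by rewrite (perm_mem (S_C _)) in_take.
Qed.

Lemma g_leM b : g b <= M b.
Proof. exact: leIr. Qed.

Lemma g_leC b : g b <= C (index b lc).+1.
Proof. exact: leIl. Qed.

Lemma h_le T z : (forall b, b \in T -> g b <= z) -> h T <= z.
Proof.
rewrite /h; elim: T => [|a T IH] H; first by rewrite big_nil le0x.
rewrite big_cons leUx H ?mem_head //=; apply: IH => b bT.
by apply: H; rewrite inE bT orbT.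
Qed.

Lemma g_le_h T b : b \in T -> g b <= h T.
Proof.
rewrite /h; elim: T => [|a T IH] //; rewrite inE big_cons => /orP[/eqP ->|bT].
  exact: leUl.
exact: le_trans (IH bT) (leUr _ _).
Qed.

Lemma S_h T b : b \in T -> b \in iota 1 n -> b \in S (h T).
Proof. by move=> bT bi; apply: (S_sub (g_le_h bT)); apply: g_mem. Qed.

Definition Inv x := h (S x) = x.

Lemma inv_of x : (forall b, b \in S x -> g b <= x) -> Inv x.
Proof.
move=> H; apply: S_eq; first exact: h_le.
by move=> b bx; apply: S_h => //; apply: S_lab bx.
Qed.

Lemma Inv_g x b : Inv x -> b \in S x -> g b <= x.
Proof. by move=> e bx; rewrite -e; apply: g_le_h. Qed.

Lemma Inv_C k : Inv (C k).
Proof.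
apply: inv_of => b; rewrite (perm_mem (S_C k)) => /index_ltn bk.
exact: le_trans (g_leC b) (C_mono bk).
Qed.


Hypothesis Hgr : graded_rank L n.

Lemma maxchainE d : maxchain d <-> exists u, d = \bot :: u /\ ch \bot u \top.
Proof. exact: maxchain_inE. Qed.

Lemma size_maxchain u : ch \bot u \top -> size u = n.
Proof.
move=> h; have : maxchain (\bot :: u) by apply/maxchainE; exists u.
by move/Hgr => /= [].
Qed.

Lemma ch_nth u j : ch \bot u \top -> (j < size u)%N ->
  covers (nth \bot (\bot :: u) j) (nth \bot (\bot :: u) j.+1) /\
  nth 0%N (labels lam (\bot :: u)) j = lam (nth \bot (\bot :: u) j) (nth \bot (\bot :: u) j.+1).
Proof.
case/andP=> p _ ju; split; first exact: (pathP \bot p).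
by rewrite /labels (nth_pairmap \bot).
Qed.

Lemma Inv_step d e i : (1 <= i <= n.-1)%N -> maxchain d -> (forall x, x \in d -> Inv x) ->
  isU lam i d e -> forall x, x \in e -> Inv x.
Proof.
move=> /andP[i1 i2] md Id [me sz ag lab] x xe.
have [u [eu hu]] := (maxchainE e).1 me.
have su := size_maxchain hu.
have szd : size d = n.+1 by rewrite -sz eu /= su.
have jx : (index x e < size e)%N by rewrite index_mem.
have ex : x = nth \bot e (index x e) by rewrite nth_index.
case: (eqVneq (index x e) i) => [ji|jni].
  2: by apply: Id; rewrite ex ag // mem_nth // -sz.
rewrite ji in ex; subst x.
have ni : (i < n)%N by lia.
have in1 : i = (i.-1).+1 by rewrite prednK.
set y := nth \bot e i.
set xm := nth \bot e i.-1.
set xp := nth \bot e i.+1.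
have [c1 l1] : covers xm y /\ nth 0%N (labels lam e) i.-1 = lam xm y.
  have H : (i.-1 < size u)%N by rewrite su; lia.
  have := ch_nth hu H; rewrite prednK // -eu; by [].
have [c2 l2] : covers y xp /\ nth 0%N (labels lam e) i = lam y xp.
  have H : (i < size u)%N by rewrite su.
  have := ch_nth hu H; rewrite -eu; by [].
rewrite l1 l2 in lab.
have xmd : xm \in d.
  rewrite /xm ag; first by rewrite mem_nth // szd; lia.
  apply/eqP; lia.
have xpd : xp \in d.
  rewrite /xp ag; first by rewrite mem_nth // szd; lia.
  apply/eqP; lia.
have py := S_cover c1; have pp := S_cover c2.
set a := lam xm y in py lab; set b := lam y xp in pp lab.
have ay : a \in S y by rewrite (perm_mem py) mem_cat mem_head orbT.
have ainS : a \in iota 1 n := S_lab ay.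
have an : (a <= n)%N by move: ainS; rewrite mem_iota add1n ltnS => /andP[].
have bny : b \notin S y.
  have := S_uniq xp; rewrite (perm_uniq pp) cat_uniq /= orbF andbT => /andP[_].
  by [].
have gxp : g a <= xp by apply: (Inv_g (Id _ xpd)); apply: (S_sub (ltW (covers_lt c2))).
set w := xp `&` M a.
have gw : g a <= w by rewrite lexI gxp g_leM.
set z := y `|` w.
have yz : y <= z by apply: leUl.
have zxp : z <= xp by rewrite leUx (ltW (covers_lt c2)) leIl.
have wy : w <= y.
  case: (covers_between c2 yz zxp) => [<-|ez]; first exact: leUr.
  exfalso.
  have zM : z <= y `|` M a by rewrite leUx leUl (le_trans (leIr _ _) (leUr _ _)).
  have bz : b \in S (y `|` M a).
    apply: (S_sub zM); rewrite ez (perm_mem pp) mem_cat mem_head orbT //.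
  have ba := S_joinM an bz bny.
  have : b = a by apply/eqP; rewrite eqn_leq ba lab.
  by move=> eb; move: bny; rewrite eb ay.
apply: inv_of => c; rewrite (perm_mem py) mem_cat inE => /orP[cxm|/eqP ->].
  exact: le_trans (Inv_g (Id _ xmd) cxm) (ltW (covers_lt c1)).
exact: le_trans gw wy.
Qed.

Lemma c_max : maxchain (\bot :: cs).
Proof. by apply/maxchainE; exists cs. Qed.

Lemma inM_inv d : inM n lam (\bot :: cs) d -> maxchain d /\ forall x, x \in d -> Inv x.
Proof.
elim=> [|i d' e ii _ [md Id] hU].
  split; first exact: c_max.
  by move=> x /mem_last_take [k _ ->]; apply: Inv_C.
split; first by case: hU.
exact: Inv_step ii md Id hU.
Qed.


Lemma not_sorted_split (r : rel nat) x u : ~~ sorted r (pm x u) ->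
  exists u1 y1 y2 u2, u = u1 ++ y1 :: y2 :: u2 /\
    ~~ r (lam (last x u1) y1) (lam y1 y2).
Proof.
elim: u x => [|y u IH] x //=.
case: u IH => [|y' u] IH //= /[dup] H.
rewrite negb_and => /orP[nr|np].
  by exists [::], y, y', u.
have [u1 [y1 [y2 [u2 [e nr]]]]] := IH y np.
by exists (y :: u1), y1, y2, u2; rewrite e.
Qed.

Lemma swap_step u1 y1 y2 u2 : ch \bot (u1 ++ y1 :: y2 :: u2) \top ->
  (lam y1 y2 < lam (last \bot u1) y1)%N ->
  exists z, [/\ ch \bot (u1 ++ z :: y2 :: u2) \top,
    isU lam (size u1).+1 (\bot :: u1 ++ y1 :: y2 :: u2) (\bot :: u1 ++ z :: y2 :: u2) &
    pm \bot (u1 ++ z :: y2 :: u2) = pm \bot u1 ++ lam y1 y2 :: lam (last \bot u1) y1 :: pm y2 u2].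
Proof.
set x := last \bot u1; set a := lam x y1; set b := lam y1 y2 => hu ba.
move: (hu); rewrite /ch cat_path last_cat /= -/x => /andP[/andP[p1 /andP[cxy1 /andP[cy1y2 p2]]] el].
have h12 : ch x [:: y1; y2] y2 by rewrite /ch /= cxy1 cy1y2 eqxx.
have [t [ht st _]] := ex_inc (ch_le h12).
have pt : perm_eq (pm x t) [:: a; b].
  by rewrite -(perm_cat2l (S x)) -(permPl (S_step ht)) (S_step h12).
have [z [cxz czy2 [ab1 ab2]]] : exists z, [/\ covers x z, covers z y2 & lam x z = b /\ lam z y2 = a].
  case: t ht st pt => [|z [|z2 [|z3 t]]] ht st pt.
  1,2,4: by move/perm_size: pt; rewrite size_pairmap /= => /eqP; rewrite ?eqSS.
  move: ht => /andP[/= /andP[cxz /andP[czz2 _]] /eqP ez2]; subst z2.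
  exists z; split=> //.
  have := st; rewrite /= andbT => pq.
  have pa : lam x z \in [:: a; b] by rewrite -(perm_mem pt) mem_head.
  have qa : lam z y2 \in [:: a; b] by rewrite -(perm_mem pt) !inE eqxx orbT.
  have un : uniq [:: lam x z; lam z y2].
    by rewrite (perm_uniq pt) /= inE andbT; apply/eqP => e; move: ba; rewrite e ltnn.
  move: pa qa un pq; rewrite !inE /= andbT.
  case/orP=> /eqP -> /orP[] /eqP ->.
  - by rewrite inE eqxx.
  - by move=> _ ab; move: ba; rewrite ltnNge ab.
  - by [].
  - by rewrite inE eqxx.
exists z.
have hu' : ch \bot (u1 ++ z :: y2 :: u2) \top.
  by rewrite /ch cat_path last_cat /= -/x p1 cxz czy2 p2.
have pmE : pm \bot (u1 ++ z :: y2 :: u2) = pm \bot u1 ++ b :: a :: pm y2 u2.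
  by rewrite pairmap_cat /= -/x ab1 ab2.
split=> //.
have su := size_maxchain hu; rewrite size_cat /= in su.
split.
- by apply/maxchainE; exists (u1 ++ z :: y2 :: u2).
- by rewrite /= !size_cat.
- move=> j jn; rewrite -(cat_cons \bot u1 (z :: _)) -(cat_cons \bot u1 (y1 :: _)) !nth_cat /=.
  case: ifP => // /negbT; rewrite -leqNgt => jl.
  case E: (j - (size u1).+1)%N => [|k] //.
  have ej : j = (size u1).+1 by apply/eqP; rewrite eqn_leq jl -subn_eq0 E.
  by move: jn; rewrite ej eqxx.
- rewrite /labels pmE /= nth_cat size_pairmap ltnn subnn /=.
  rewrite nth_cat size_pairmap ltnNge leqnSn /= subSn // subnn /=.
  exact: ltnW.
Qed.

Definition cc := \bot :: cs.

Section Real.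
Variable P : pred nat.
Hypothesis HPi : forall b, P b -> b \in iota 1 n.
Hypothesis HPg : forall b, P b -> forall c, c \in S (g b) -> P c.

Definition rP := fun a b : nat => P b ==> P a.
Definition goodP (l : seq nat) := pairwise (fun a b => (~~ P a && P b) ==> (b < a)%N) l.
Fixpoint invP (l : seq nat) : nat :=
  if l is a :: l' then ((if P a then 0 else count P l') + invP l')%N else 0%N.

Lemma sorted_take_countP l : sorted rP l -> take (count P l) l = filter P l.
Proof.
elim: l => [|a l IH] //= so.
have sl := path_sorted so.
case Pa: (P a) => /=; first by rewrite IH.
have c0 : forall (q : nat) (l' : seq nat), ~~ P q -> path rP q l' -> count P l' = 0%N.
  move=> q l'; elim: l' q => [|q' l' IH'] q //= nPq /andP[rq pl].
  have Pq' : P q' = false by move: rq; rewrite /rP (negbTE nPq); case: (P q').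
  by rewrite Pq' /= (IH' q' (negbT Pq') pl).
have cl := c0 a l (negbT Pa) so; rewrite add0n cl take0.
by apply/esym/eqP; rewrite -size_eq0 size_filter cl.
Qed.

Lemma invP_swap l1 a b l2 : ~~ P a -> P b ->
  (invP (l1 ++ b :: a :: l2) < invP (l1 ++ a :: b :: l2))%N.
Proof.
move=> Pa Pb; elim: l1 => [|c l1 IH] /=.
  rewrite Pb (negbTE Pa) /=; lia.
have -> : count P (l1 ++ b :: a :: l2) = count P (l1 ++ a :: b :: l2).
  by rewrite !count_cat /=; congr (_ + _); exact: addnCA.
by rewrite ltn_add2l.
Qed.

Lemma good_swap l1 a b l2 : P b -> goodP (l1 ++ a :: b :: l2) -> goodP (l1 ++ b :: a :: l2).
Proof.
move=> Pb; rewrite /goodP !pairwise_cat => /and3P[ar pl pr].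
apply/and3P; split=> //.
  move: ar; rewrite /allrel; apply: sub_all => x /=.
  by rewrite andbCA.
move: pr => /= /andP[/andP[rab ->] /andP[-> ->]].
by rewrite Pb.
Qed.

Lemma good_c : goodP lc.
Proof.
apply/(pairwiseP 0%N) => i j; rewrite !inE => il jl ij.
apply/implyP => /andP[nPa Pb].
rewrite ltnNge; apply/negP => ab.
move/negP: nPa; apply; apply: (HPg Pb).
have ul : uniq lc := pm_uniq Hc.
rewrite /g index_uniq //.
apply: S_meetM.
- have := HPi Pb; rewrite mem_iota add1n ltnS => /andP[_]; by [].
- rewrite (perm_mem (S_C _)) in_take ?mem_nth // index_uniq //.
  exact: (leq_trans ij).
- by [].
Qed.

Lemma sorted_case u : inM n lam cc (\bot :: u) -> ch \bot u \top -> sorted rP (pm \bot u) ->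
  exists2 z, inQ n lam cc z & forall b, (b \in S z) = P b.
Proof.
move=> hM hu so.
set l := pm \bot u.
set z := last \bot (take (count P l) u).
exists z; first by exists (\bot :: u) => //; apply: last_take_mem.
move=> b; have [h1 _] := ch_split (count P l) hu.
rewrite (perm_mem (S_ch h1)) -take_pairmap -/l sorted_take_countP // mem_filter.
case Pb: (P b) => //=.
by rewrite (perm_mem (top_perm hu)) HPi.
Qed.

Lemma R_aux N u : inM n lam cc (\bot :: u) -> goodP (pm \bot u) -> (invP (pm \bot u) <= N)%N ->
  exists2 z, inQ n lam cc z & forall b, (b \in S z) = P b.
Proof.
elim: N u => [|N IH] u hM hg hi.
all: have [md _] := inM_inv hM.
all: have [u' [[<-] hu]] := (maxchainE _).1 md.
all: case: (boolP (sorted rP (pm \bot u))) => [so|nso]; first exact: sorted_case hM hu so.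
all: have [u1 [y1 [y2 [u2 [eu nr]]]]] := not_sorted_split nso.
all: move: nr; rewrite /rP negb_imply => /andP[Pb nPa].
all: have ba : (lam y1 y2 < lam (last \bot u1) y1)%N
       by move: hg; rewrite eu pairmap_cat /goodP pairwise_cat /= Pb nPa => /and3P[_ _ /andP[/andP[] ]].
all: rewrite eu in hu hM hg hi.
all: have [z [hz hU pmE]] := swap_step hu ba.
all: have lt := invP_swap (pm \bot u1) (pm y2 u2) nPa Pb.
all: rewrite pairmap_cat /= in hi hg; rewrite -pmE in lt.
- by move: hi; rewrite leqn0 => /eqP e; rewrite e in lt.
apply: (IH (u1 ++ z :: y2 :: u2)).
- apply: inM_step hM hU.
  have su := size_maxchain hu; rewrite size_cat /= in su.
  by rewrite -su !addnS /= ltnS leq_addr.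
- by rewrite pmE; apply: good_swap.
- by rewrite -ltnS (leq_trans lt hi).
Qed.

Lemma realize : exists2 z, inQ n lam cc z & forall b, (b \in S z) = P b.
Proof.
apply: (R_aux (N := invP lc) (u := cs)) => //; first exact: inM_refl.
exact: good_c.
Qed.

End Real.

Lemma Q_inv x : inQ n lam cc x -> Inv x.
Proof. by case=> d /inM_inv [_ H] /H. Qed.

Lemma Q_meet x y : inQ n lam cc x -> inQ n lam cc y -> inQ n lam cc (x `&` y).
Proof.
move=> qx qy; have ix := Q_inv qx; have iy := Q_inv qy.
pose P := fun b => (b \in S x) && (b \in S y).
have HPi : forall b, P b -> b \in iota 1 n by move=> b /andP[/S_lab].
have HPg : forall b, P b -> forall c, c \in S (g b) -> P c.
  move=> b /andP[bx byy] c cg; apply/andP; split.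
    exact: (S_sub (Inv_g ix bx)).
  exact: (S_sub (Inv_g iy byy)).
have [z qz ez] := realize HPi HPg.
have iz := Q_inv qz.
have zle : z <= x `&` y.
  rewrite -iz lexI; apply/andP; split; apply: h_le => b; rewrite ez => /andP[bx byy].
    exact: Inv_g ix bx.
  exact: Inv_g iy byy.
suff <- : z = x `&` y by [].
apply: (S_eq zle) => b bxy; rewrite ez; apply/andP; split.
  exact: (S_sub (leIl x y)).
exact: (S_sub (leIr y x)).
Qed.

Lemma Q_join x y : inQ n lam cc x -> inQ n lam cc y -> inQ n lam cc (x `|` y).
Proof.
move=> qx qy; have ix := Q_inv qx; have iy := Q_inv qy.
pose P := fun b => (b \in S x) || (b \in S y).
have HPi : forall b, P b -> b \in iota 1 n by move=> b /orP[] /S_lab.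
have HPg : forall b, P b -> forall c, c \in S (g b) -> P c.
  move=> b /orP[bx|byy] c cg; apply/orP.
    by left; exact: (S_sub (Inv_g ix bx)).
  by right; exact: (S_sub (Inv_g iy byy)).
have [z qz ez] := realize HPi HPg.
have iz := Q_inv qz.
have zge : x `|` y <= z.
  rewrite leUx -ix -iy; apply/andP; split; apply: h_le => b bS; apply: Inv_g iz _;
    by rewrite ez /P bS ?orbT.
suff -> : x `|` y = z by [].
apply: (S_eq zge) => b; rewrite ez => /orP[bx|byy].
  exact: (S_sub (leUl x y)).
exact: (S_sub (leUr y x)).
Qed.

Lemma Q_M k : (k <= n)%N -> inQ n lam cc (M k).
Proof.
move=> kn.
pose P := fun b => b \in iota 1 k.
have HPi : forall b, P b -> b \in iota 1 n.
  by move=> b; rewrite /P !mem_iota => /andP[-> bk]; apply: leq_trans bk _; rewrite leq_add2l.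
have HPg : forall b, P b -> forall c, c \in S (g b) -> P c.
  move=> b Pb c cg.
  have bn : (b <= n)%N by move: (HPi _ Pb); rewrite mem_iota add1n ltnS => /andP[].
  have := S_sub (g_leM b) cg; rewrite (S_M_mem _ bn) /P !mem_iota => /andP[-> cb].
  by move: Pb; rewrite /P mem_iota => /andP[_ bk]; apply: leq_trans cb _; rewrite leq_add2l.
have [z qz ez] := realize HPi HPg.
suff <- : z = M k by [].
apply: S_M_eq => //; apply: uniq_perm; [exact: S_uniq | exact: iota_uniq | by move=> b; rewrite ez].
Qed.

Lemma Q_m0 x : x \in \bot :: s0 -> inQ n lam cc x.
Proof.
move=> /mem_last_take [k kn ->]; apply: Q_M.
by rewrite -(size_maxchain Hs0).
Qed.

Lemma Q_c x : x \in cc -> inQ n lam cc x.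
Proof. by move=> xc; exists cc => //; apply: inM_refl. Qed.

Lemma lc_meet (G : {set L}) x y : lattice_closed G -> x \in G -> y \in G -> x `&` y \in G.
Proof. by move=> /forallP /(_ x) /implyP H xG yG; move: (H xG) => /forallP /(_ y) /implyP /(_ yG) /andP[]. Qed.

Lemma lc_join (G : {set L}) x y : lattice_closed G -> x \in G -> y \in G -> x `|` y \in G.
Proof. by move=> /forallP /(_ x) /implyP H xG yG; move: (H xG) => /forallP /(_ y) /implyP /(_ yG) /andP[]. Qed.

Lemma h_in (G : {set L}) T : lattice_closed G -> \bot \in G -> (forall b, g b \in G) -> h T \in G.
Proof.
move=> lG bG gG; rewrite /h; elim: T => [|a T IH]; first by rewrite big_nil.
by rewrite big_cons; apply: lc_join.
Qed.

Lemma Q_sub_L x : inQ n lam cc x -> x \in Lgen (\bot :: s0) cc.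
Proof.
move=> qx; rewrite -(Q_inv qx).
apply/bigcapP => G /andP[sub lG].
have inG : forall y, (y \in \bot :: s0) || (y \in cc) -> y \in G.
  by move=> y yA; apply: (subsetP sub); rewrite inE.
apply: h_in => //; first by apply: inG; rewrite mem_head.
move=> b; apply: lc_meet => //; apply: inG.
  by rewrite /C last_take_mem orbT.
by rewrite /M last_take_mem.
Qed.

End Main.
End Chains.

Unset Implicit Arguments.
From Stdlib Require Import ClassicalEpsilon.
Theorem mainTheorem8 (disp : Order.disp_t) (L : finTBLatticeType disp)
  (n : nat) (lam : L -> L -> nat) (m0 m m' : seq L) :
  graded_rank L n ->
  Sn_EL_labeling n lam ->
  maxchain m0 -> labels lam m0 = iota 1 n ->
  maxchain m ->
  inM n lam m m' ->
  forall x : L, inQ n lam m' x <-> x \in Lgen m0 m'.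
Proof.
move=> Hgr [HEL Hperm] Hm0 Hl0 Hm HM.
have Hm' : maxchain m' by elim: HM => // i d e _ _ _ [].
case/maxchain_inE: Hm0 => s0 [e0 hs0]; subst m0.
case/maxchain_inE: Hm' => cs [e' hc]; subst m'.
have Hl0' : pairmap lam \bot s0 = iota 1 n by [].
have QL := Q_sub_L HEL Hperm hs0 Hl0' hc Hgr.
move=> x; split; first exact: QL.
pose Qb (y : L) : bool := if excluded_middle_informative (inQ n lam (cc cs) y) then true else false.
have QbP : forall y, Qb y -> inQ n lam (cc cs) y.
  by move=> y; rewrite /Qb; case: excluded_middle_informative.
have QbI : forall y, inQ n lam (cc cs) y -> Qb y.
  by move=> y qy; rewrite /Qb; case: excluded_middle_informative.
move/bigcapP => /(_ [set y | Qb y]) H.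
have : x \in [set y | Qb y].
  apply: H; apply/andP; split.
    apply/subsetP => y; rewrite !in_set => /orP[ym|yc]; apply: QbI.
      exact (Q_m0 HEL Hperm hs0 Hl0' hc Hgr ym).
    exact: Q_c yc.
  apply/forallP => y; apply/implyP; rewrite inE => /QbP qy.
  apply/forallP => z; apply/implyP; rewrite inE => /QbP qz.
  rewrite !inE; apply/andP; split; apply: QbI.
    exact (Q_meet HEL Hperm hs0 Hl0' hc Hgr qy qz).
  exact (Q_join HEL Hperm hs0 Hl0' hc Hgr qy qz).
by rewrite inE => /QbP.
Qed.
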